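(* In the category of topological spaces, let $\{b\}\to\{a\searrow b\}$ be the inclusion of the closed point $b$ into the Sierpiński space. Then: (1) $\{\{b\}\to\{a\searrow b\}\}^l$ is exactly the class of continuous maps $f:A\to B$ with dense image $f(A)\subseteq B$; (2) $\{\{b\}\to\{a\searrow b\}\}^{lr}$ is exactly the class of closed embeddings, i.e. continuous maps $g:A\to X$ which are homeomorphisms onto a closed subset of $X$ equipped with the induced topology.
   Context: For morphisms $f:A\to B$ and $g:X\to Y$ in a category, write $f\rightthreetimes g$ (''$f$ has the left lifting property with respect to $g$'') if for all morphisms $i:A\to X$, $j:B\to Y$ with $g\circ i=j\circ f$ there exists a morphism $h:B\to X$ with $h\circ f=i$ and $g\circ h=j$. For a class $C$ of morphisms, $C^l=\{f:\ f\rightthreetimes g\text{ for all }g\in C\}$ and $C^r=\{g:\ f\rightthreetimes g\text{ for all }f\in C\}$; $C^{lr}=(C^l)^r$. $\{a\searrow b\}$ denotes the Sierpiński space on points $a,b$ with open sets $\emptyset,\{a\},\{a,b\}$ (so $a$ is open, $b$ is closed and $b\in\overline{\{a\}}$). *)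

(* Defs.v *)
From Stdlib Require Import Classical.

Set Implicit Arguments.

Record Top := MkTop {
  carrier :> Type;
  is_open : (carrier -> Prop) -> Prop;
  open_full : is_open (fun _ => True);
  open_inter : forall U V, is_open U -> is_open V -> is_open (fun x => U x /\ V x);
  open_union : forall (F : (carrier -> Prop) -> Prop),
      (forall U, F U -> is_open U) -> is_open (fun x => exists U, F U /\ U x)
}.

Arguments is_open {t} _.

Record cmap (A B : Top) := MkCmap {
  fn :> A -> B;
  fn_cont : forall V : B -> Prop, is_open V -> is_open (fun a => V (fn a))
}.

Definition llp {A B X Y : Top} (f : cmap A B) (g : cmap X Y) : Prop :=
  forall (i : cmap A X) (j : cmap B Y),
    (forall a, g (i a) = j (f a)) ->
    exists h : cmap B X, (forall a, h (f a) = i a) /\ (forall b, g (h b) = j b).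

Definition is_closed {X : Top} (C : X -> Prop) : Prop := is_open (fun x => ~ C x).
Definition closure {X : Top} (S : X -> Prop) : X -> Prop :=
  fun x => forall C : X -> Prop, is_closed C -> (forall y, S y -> C y) -> C x.
Definition range {A B : Type} (f : A -> B) : B -> Prop := fun b => exists a, f a = b.
Definition dense {X : Top} (S : X -> Prop) : Prop := forall x, closure S x.

(** Closed embedding: a continuous map that is a homeomorphism onto a closed
    subset of the codomain carrying the induced (subspace) topology:
    injective, closed image, and images of open sets are open in the
    subspace topology of the image. *)
Definition closed_embedding {A X : Top} (g : cmap A X) : Prop :=
  (forall a1 a2, g a1 = g a2 -> a1 = a2) /\
  is_closed (range g) /\
  (forall U : A -> Prop, is_open U ->
     exists V : X -> Prop, is_open V /\
       forall x, (exists a, U a /\ g a = x) <-> (V x /\ range g x)).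

Definition point_top : Top.
Proof.
  refine (@MkTop unit (fun _ => True) I _ _); intros; exact I.
Defined.

(** Sierpiński space {a ↘ b}: carrier bool with a := true, b := false;
    open sets ∅, {a}, {a,b}, i.e. exactly the U with (b ∈ U -> a ∈ U). *)
Definition sier_a : bool := true.
Definition sier_b : bool := false.

Definition sierpinski : Top.
Proof.
  refine (@MkTop bool (fun U => U sier_b -> U sier_a) _ _ _).
  - intros _; exact I.
  - intros U V HU HV [Ub Vb]; split; auto.
  - intros F HF [U [FU Ub]]; exists U; split; auto; apply (HF U FU Ub).
Defined.

Definition incl_b : cmap point_top sierpinski.
Proof.
  refine (@MkCmap point_top sierpinski (fun _ => sier_b) _).
  intros; exact I.
Defined.

(* Main.v *)
Require Import Defs.
From Stdlib Require Import Classical ClassicalEpsilon FunctionalExtensionality PropExtensionality.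

Lemma open_ext {X : Top} (U V : X -> Prop) :
  (forall x, U x <-> V x) -> is_open U -> is_open V.
Proof.
  intros H HU. assert (E : U = V).
  { apply functional_extensionality; intro x; apply propositional_extensionality; auto. }
  subst; auto.
Qed.

Lemma open_empty {X : Top} : is_open (fun _ : X => False).
Proof.
  apply open_ext with (fun x => exists U, (fun _ : X -> Prop => False) U /\ U x).
  - firstorder.
  - apply open_union; intros U [].
Qed.

Lemma open_const {X : Top} (P : Prop) : is_open (fun _ : X => P).
Proof.
  destruct (classic P) as [p|np].
  - apply open_ext with (fun _ => True); [firstorder | apply open_full].
  - apply open_ext with (fun _ => False); [firstorder | apply open_empty].
Qed.

Definition const_pt (A : Top) : cmap A point_top :=
  @MkCmap A point_top (fun _ => tt) (fun V _ => open_const (V tt)).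

Lemma llp_dense {A B : Top} (f : cmap A B) : llp f incl_b -> dense (range f).
Proof.
  intros H b C HC HS. apply NNPP; intro nC.
  set (jf := fun b => if excluded_middle_informative (C b) then false else true).
  assert (Hj : forall V : sierpinski -> Prop, is_open V -> is_open (fun a => V (jf a))).
  { intros V HV. cbn in HV. unfold sier_b, sier_a in HV.
    destruct (classic (V false)) as [Vf|nVf];
    [| destruct (classic (V true)) as [Vt|nVt]].
    - apply open_ext with (fun _ => True); [|apply open_full].
      intro x; unfold jf; destruct (excluded_middle_informative (C x)); tauto.
    - apply open_ext with (fun x => ~ C x); [|exact HC].
      intro x; unfold jf; destruct (excluded_middle_informative (C x)); tauto.
    - apply open_ext with (fun _ => False); [|apply open_empty].
      intro x; unfold jf; destruct (excluded_middle_informative (C x)); tauto. }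
  destruct (H (const_pt A) (@MkCmap B sierpinski jf Hj)) as [h [_ Hh]].
  - intro a. cbn. unfold jf. destruct (excluded_middle_informative (C (f a))); auto.
    exfalso; apply n; apply HS; exists a; auto.
  - specialize (Hh b). cbn in Hh. unfold jf in Hh.
    destruct (excluded_middle_informative (C b)); [tauto | discriminate].
Qed.

Lemma dense_llp {A B : Top} (f : cmap A B) : dense (range f) -> llp f incl_b.
Proof.
  intros D i j Hc. exists (const_pt B). split.
  - intro a. destruct (i a). reflexivity.
  - intro b. cbn.
    assert (HC : is_closed (fun b => j b = false)).
    { unfold is_closed. apply open_ext with (fun b => (fun s : bool => s = true) (j b)).
      - intro x; cbn; destruct (j x); split; congruence.
      - apply (fn_cont j (fun s : sierpinski => s = true)). cbn. auto. }
    symmetry. apply (D b _ HC). intros y [a <-]. rewrite <- Hc. reflexivity.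
Qed.

Definition disc2 : Top.
Proof.
  refine (@MkTop bool (fun _ => True) I _ _); intros; exact I.
Defined.

Definition optTop {X Y : Top} (g : cmap X Y) (y : Y) : Top.
Proof.
  refine (@MkTop (option X)
    (fun U => is_open (fun x => U (Some x)) /\
       (U None -> exists V, is_open V /\ V y /\ forall x, V (g x) -> U (Some x))) _ _ _).
  - split; [apply open_full|]. intros _; exists (fun _ => True); split; [apply open_full|auto].
  - intros U V [HU1 HU2] [HV1 HV2]. split; [apply (open_inter _ _ _ HU1 HV1)|].
    intros [Un Vn]. destruct (HU2 Un) as [V1 [O1 [y1 H1]]].
    destruct (HV2 Vn) as [V2 [O2 [y2 H2]]].
    exists (fun z => V1 z /\ V2 z); split; [apply open_inter; auto|].
    split; [auto|]. intros x [a b]; auto.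
  - intros F HF. split.
    + apply open_ext with (fun x => exists W, (fun W => exists U, F U /\ forall x, W x <-> U (Some x)) W /\ W x).
      * intro x; split.
        -- intros [W [[U [FU HW]] Wx]]. exists U; split; auto; apply HW; auto.
        -- intros [U [FU Ux]]. exists (fun x => U (Some x)); split; auto.
           exists U; split; auto; tauto.
      * apply open_union. intros W [U [FU HW]].
        apply open_ext with (fun x => U (Some x)); [firstorder|].
        apply (HF U FU).
    + intros [U [FU Un]]. destruct (proj2 (HF U FU) Un) as [V [OV [Vy HV]]].
      exists V; repeat split; auto. intros x Vx; exists U; split; auto.
Defined.

Definition indTop {X Y : Top} (g : cmap X Y) : Top.
Proof.
  refine (@MkTop X (fun U => exists V, is_open V /\ forall x, U x <-> V (g x)) _ _ _).
  - exists (fun _ => True); split; [apply open_full|tauto].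
  - intros U V [V1 [O1 H1]] [V2 [O2 H2]].
    exists (fun z => V1 z /\ V2 z); split; [apply open_inter; auto|].
    intro x; rewrite H1, H2; tauto.
  - intros F HF.
    exists (fun y => exists V, (fun V => is_open V /\ exists U, F U /\ forall x, U x <-> V (g x)) V /\ V y).
    split.
    + apply open_union. intros V [OV _]; auto.
    + intro x; split.
      * intros [U [FU Ux]]. destruct (HF U FU) as [V [OV HV]].
        exists V; split; [split; auto; exists U; auto | apply HV; auto].
      * intros [V [[OV [U [FU HU]]] Vx]]. exists U; split; auto; apply HU; auto.
Defined.

Theorem claim2 :
  (* (1) {b -> {a ↘ b}}^l = continuous maps with dense image *)
  (forall (A B : Top) (f : cmap A B), llp f incl_b <-> dense (range f)) /\
  (* (2) {b -> {a ↘ b}}^{lr} = closed embeddings *)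
  (forall (X Y : Top) (g : cmap X Y),
     (forall (A B : Top) (f : cmap A B), llp f incl_b -> llp f g)
     <-> closed_embedding g).
Proof.
  split.
  { intros A B f; split; [apply llp_dense | apply dense_llp]. }
  intros X Y g; split.
  - intro H. split; [|split].
    +
      intros x1 x2 E.
      set (f := @MkCmap disc2 point_top (fun _ => tt) (fun V _ => I)).
      set (i := @MkCmap disc2 X (fun b : bool => if b then x1 else x2) (fun V _ => I)).
      set (j := @MkCmap point_top Y (fun _ => g x1) (fun V _ => open_const (V (g x1)))).
      destruct (H disc2 point_top f) with (i := i) (j := j) as [h [Hh _]].
      * apply dense_llp. intros [] C _ HS. apply HS. exists true; reflexivity.
      * intros [|]; cbn; auto.
      * pose proof (Hh true) as H1; pose proof (Hh false) as H2; cbn in H1, H2.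
        congruence.
    +
      unfold is_closed.
      apply open_ext with (fun y => exists O, (fun O => is_open O /\ forall z, range g z -> ~ O z) O /\ O y).
      2:{ apply open_union. intros O [OO _]; auto. }
      intro y; split.
      * intros [O [[OO HO] Oy]] Hr. exact (HO y Hr Oy).
      * intro nr.
        assert (Hcl : ~ closure (range g) y).
        { intro Hcl.
          set (f := @MkCmap X (optTop g y) (fun x => Some x) (fun V HV => proj1 HV)).
          assert (Hj : forall V : Y -> Prop, is_open V ->
                     @is_open (optTop g y) (fun o => V (match o with Some x => g x | None => y end))).
          { intros V HV. split.
            - exact (fn_cont g V HV).
            - intro Vy. exists V; repeat split; auto. }
          set (j := @MkCmap (optTop g y) Y (fun o => match o with Some x => g x | None => y end) Hj).
          set (i := @MkCmap X X (fun x => x) (fun V HV => HV)).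
          destruct (H X (optTop g y) f) with (i := i) (j := j) as [h [_ Hh]].
          - apply dense_llp. intros [x|] C HC HS.
            + apply HS; exists x; reflexivity.
            + apply NNPP; intro nC.
              destruct (proj2 HC nC) as [V [OV [Vy HV]]].
              assert (HVc : is_closed (fun z => ~ V z)).
              { unfold is_closed. apply open_ext with V; [|exact OV].
                intro z; split; [tauto | apply NNPP]. }
              apply (Hcl _ HVc); auto.
              intros z [x <-] Vgx. apply (HV x Vgx). apply HS. exists x; reflexivity.
          - intro a; reflexivity.
          - apply nr. exists (h None). exact (Hh None). }
        apply not_all_ex_not in Hcl. destruct Hcl as [C HC].
        apply imply_to_and in HC; destruct HC as [HCc HC].
        apply imply_to_and in HC; destruct HC as [HS nC].
        exists (fun z => ~ C z); split; [split; [exact HCc|] | exact nC].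
        intros z Hz nz. apply nz, HS, Hz.
    +
      intros U HU.
      set (f := @MkCmap X (indTop g) (fun x => x)
                  (fun V HV => match HV with ex_intro _ W (conj OW HW) =>
                     open_ext _ _ (fun x => iff_sym (HW x)) (fn_cont g W OW) end)).
      assert (Hj : forall V : Y -> Prop, is_open V -> @is_open (indTop g) (fun x => V (g x))).
      { intros V HV. exists V; split; auto; tauto. }
      set (j := @MkCmap (indTop g) Y (fun x => g x) Hj).
      set (i := @MkCmap X X (fun x => x) (fun V HV => HV)).
      destruct (H X (indTop g) f) with (i := i) (j := j) as [h [Hh1 _]].
      * apply dense_llp. intros x C _ HS. apply HS. exists x; reflexivity.
      * intro; reflexivity.
      * destruct (fn_cont h U HU) as [V [OV HV]].
        exists V; split; auto. intro y; split.
        -- intros [a [Ua <-]]. split; [|exists a; auto].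
           apply HV. cbn in Hh1. rewrite Hh1. exact Ua.
        -- intros [Vy [a <-]]. exists a; split; auto.
           apply HV in Vy. cbn in Hh1. rewrite Hh1 in Vy. exact Vy.
  - intros [Inj [Cl Emb]] A B f Hf i j Hc.
    pose proof (llp_dense f Hf) as D.
    assert (Hr : forall b, exists x, g x = j b).
    { intro b. apply (D b (fun b => range g (j b))).
      - exact (fn_cont j _ Cl).
      - intros y [a <-]. exists (i a). apply Hc. }
    set (hf := fun b => proj1_sig (constructive_indefinite_description _ (Hr b))).
    assert (Hs : forall b, g (hf b) = j b).
    { intro b; unfold hf; destruct (constructive_indefinite_description _ (Hr b)); auto. }
    assert (Hcont : forall U : X -> Prop, is_open U -> is_open (fun b => U (hf b))).
    { intros U HU. destruct (Emb U HU) as [V [OV HV]].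
      apply open_ext with (fun b => V (j b)); [|exact (fn_cont j V OV)].
      intro b; split.
      - intro Vj. destruct (proj2 (HV (j b)) (conj Vj (ex_intro _ _ (Hs b)))) as [a [Ua Ea]].
        rewrite <- Hs in Ea. apply Inj in Ea. subst; auto.
      - intro Uh. apply (HV (j b)). exists (hf b); auto. }
    exists (@MkCmap B X hf Hcont). split.
    + intro a; cbn. apply Inj. rewrite Hs. symmetry; apply Hc.
    + intro b; cbn; apply Hs.
Qed.
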